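(* Let $q$ be a prime power and let $\mathcal{F}=(\mathcal{F}_1,\ldots,\mathcal{F}_r)$ be a flag of type $(t_1,\ldots,t_r)$ on $\mathbb{F}_{q^n}$. Assume $m$ is a divisor of $n$ with $m=t_i$ for some $i\in\{1,\ldots,r\}$, and let $\beta\in\mathbb{F}_{q^n}^*$ be such that $\mathbb{F}_{q^m}^*\subseteq\langle\beta\rangle$. Then: (1) $\frac{|\beta|}{q^m-1}$ divides $|\mathrm{Orb}_\beta(\mathcal{F})|$; (2) $|\mathrm{Orb}_\beta(\mathcal{F})|=\frac{|\beta|}{q^m-1}$ if and only if every subspace $\mathcal{F}_j$ ($1\le j\le r$) is a vector space over $\mathbb{F}_{q^m}$; in particular, if this equality holds, then $t_1=m$.
   Context: $\mathbb{F}_{q^n}$ is regarded as an $\mathbb{F}_q$-vector space. A flag of type $(t_1,\ldots,t_r)$ on $\mathbb{F}_{q^n}$ is a sequence $(\mathcal{F}_1,\ldots,\mathcal{F}_r)$ of $\mathbb{F}_q$-subspaces with $\{0\}\subsetneq\mathcal{F}_1\subsetneq\cdots\subsetneq\mathcal{F}_r\subsetneq\mathbb{F}_{q^n}$ and $\dim_{\mathbb{F}_q}\mathcal{F}_i=t_i$. For $\beta\in\mathbb{F}_{q^n}^*$, $|\beta|$ is its multiplicative order, $\mathcal{F}\beta=(\mathcal{F}_1\beta,\ldots,\mathcal{F}_r\beta)$ where $\mathcal{U}\beta=\{u\beta:u\in\mathcal{U}\}$, and $\mathrm{Orb}_\beta(\mathcal{F})=\{\mathcal{F}\beta^j:0\le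 j\le|\beta|-1\}$. *)

(* Defs.v *)
(* F_{q^n} is modelled as a finite field L with #|L| = q^n. *)
From mathcomp Require Import all_boot all_order all_algebra all_fingroup all_field.
Set Implicit Arguments. Unset Strict Implicit. Unset Printing Implicit Defensive.
Import GRing.Theory.
Local Open Scope ring_scope.

Definition prime_power (q : nat) : Prop :=
  exists p k : nat, [/\ prime p, (0 < k)%N & q = (p ^ k)%N].

(* the subfield F_k = {x | x^k = x} of L (k a power of the characteristic) *)
Definition Fsub (L : finFieldType) (k : nat) : {set L} :=
  [set x : L | x ^+ k == x].

Definition is_subspace_over (L : finFieldType) (K U : {set L}) : Prop :=
  [/\ (0 : L) \in U,
      forall x y, x \in U -> y \in U -> x + y \in U
    & forall a x, a \in K -> x \in U -> a * x \in U].

Definition Fq_subspace_dim (L : finFieldType) (q : nat) (U : {set L}) (t : nat) : Prop :=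
  is_subspace_over (Fsub L q) U /\ #|U| = (q ^ t)%N.

Definition is_flag (L : finFieldType) (q : nat) (Fl : seq {set L}) (t : seq nat) : Prop :=
  [/\ size Fl = size t /\ (0 < size Fl)%N,
      forall i, (i < size Fl)%N -> Fq_subspace_dim q (nth set0 Fl i) (nth 0%N t i),
      [set (0 : L)] \proper nth set0 Fl 0,
      forall i, (i.+1 < size Fl)%N -> nth set0 Fl i \proper nth set0 Fl i.+1
    & nth set0 Fl (size Fl).-1 \proper [set: L]].

Definition shift_set (L : finFieldType) (U : {set L}) (b : L) : {set L} :=
  [set u * b | u in U].

Definition shift_flag (L : finFieldType) (Fl : seq {set L}) (b : L) : seq {set L} :=
  map (fun U => shift_set U b) Fl.

Definition orbit_flag (L : finFieldType) (b : {unit L}) (Fl : seq {set L}) : seq (seq {set L}) :=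
  undup [seq shift_flag Fl ((val b) ^+ j) | j <- iota 0 #[b]%g].

(* Main.v *)
Require Import Defs.
From mathcomp Require Import all_boot all_order all_algebra all_fingroup all_field.
Import GRing.Theory.
Local Open Scope ring_scope.
From mathcomp Require Import all_solvable.

Set Implicit Arguments. Unset Strict Implicit.
Section Aux.
Variable L : finFieldType.

Lemma shift_setM (U : {set L}) x y : shift_set (shift_set U x) y = shift_set U (x * y).
Proof.
apply/setP=> z; apply/imsetP/imsetP.
  by case=> w /imsetP[u uU ->] ->; exists u => //; rewrite mulrA.
by case=> u uU ->; exists (u * x); [apply/imsetP; exists u | rewrite mulrA].
Qed.

Lemma shift_set1 (U : {set L}) : shift_set U 1 = U.
Proof.
apply/setP=> z; apply/imsetP/idP; first by case=> u uU ->; rewrite mulr1.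
by move=> zU; exists z; rewrite ?mulr1.
Qed.

Lemma shift_flagM (Fl : seq {set L}) x y :
  shift_flag (shift_flag Fl x) y = shift_flag Fl (x * y).
Proof. by rewrite /shift_flag -map_comp; apply: eq_map => U /=; rewrite shift_setM. Qed.

Lemma shift_flag1 (Fl : seq {set L}) : shift_flag Fl 1 = Fl.
Proof. by rewrite /shift_flag (eq_map (@shift_set1)) map_id. Qed.

Lemma shift_flag_inj (u : {unit L}) : injective (fun Fl : seq {set L} => shift_flag Fl (val u)).
Proof.
move=> F1 F2 /= E.
have: shift_flag (shift_flag F1 (val u)) (val u)^-1 = shift_flag (shift_flag F2 (val u)) (val u)^-1 by rewrite E.
by rewrite !shift_flagM mulrV ?(valP u) // !shift_flag1.
Qed.

Lemma fermat_set (A : {set L}) (u : {unit L}) :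
  0 \in A -> shift_set A (val u) = A -> (#[u]%g %| (#|A| - 1))%N.
Proof.
move=> A0 Au.
have cA : #|A| = (#|A :\ 0|).+1 by rewrite (cardsD1 0 A) A0.
rewrite cA subn1 /=.
set B := A :\ 0.
have u0 : val u != 0 by rewrite -unitfE (valP u).
have EB : [set x * val u | x in B] = B.
  apply/setP=> z; apply/imsetP/idP.
    case=> x /setD1P[x0 xA] ->{z}; apply/setD1P; split; first by rewrite mulf_neq0.
    by rewrite -Au; apply/imsetP; exists x.
  case/setD1P=> z0; rewrite -{1}Au => /imsetP[x xA ez]; subst z; exists x => //.
  apply/setD1P; split=> //; apply: contraNneq z0 => ->; by rewrite mul0r.
have inj : {in B &, injective (fun x => x * val u)} by move=> x y _ _; apply: mulIf.
have E : \prod_(x in B) x = \prod_(x in B) (x * val u).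
  by rewrite -{1}EB big_imset.
rewrite big_split /= prodr_const in E.
have P0 : \prod_(x in B) x != 0.
  by apply/prodf_neq0 => x /setD1P[].
have : val u ^+ #|B| = 1.
  by apply: (mulfI P0); rewrite mulr1.
rewrite -FinRing.val_unitX -FinRing.val_unit1 => /val_inj e.
by rewrite order_dvdn e.
Qed.

End Aux.
Unset Implicit Arguments. Set Strict Implicit.
Lemma dvd_exp_sub1 q m n : (m %| n)%N -> (q ^ m - 1 %| q ^ n - 1)%N.
Proof.
case/dvdnP=> k ->; rewrite mulnC expnM.
set x := (q ^ m)%N.
case: x => [|x]; first by case: k => //= k; rewrite exp0n.
rewrite subn1 /=.
have h : (x.+1 ^ k = 1 %[mod x])%N.
  by rewrite -modnXm -addn1 modnDl modnXm exp1n.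
case: (posnP (x.+1 ^ k)) => [-> //| pos].
by rewrite -(eqn_mod_dvd _ pos) h.
Qed.
Lemma orbit_period (L : finFieldType) (b : {unit L}) (Fl : seq {set L}) :
  exists s, [/\ (0 < s)%N, (s %| #[b]%g)%N, size (orbit_flag b Fl) = s &
     forall j, (shift_flag Fl (val b ^+ j) == Fl) = (s %| j)%N].
Proof.
set X := fun j => shift_flag Fl (val b ^+ j).
have XD a c : X (a + c)%N = shift_flag (X a) (val b ^+ c).
  by rewrite /X shift_flagM exprD.
have PD a c : X a = Fl -> X (a + c)%N = X c.
  by move=> Pa; rewrite XD Pa.
set N := #[b]%g.
have N0 : (0 < N)%N by exact: order_gt0.
have PN : X N = Fl.
  by rewrite /X -FinRing.val_unitX expg_order FinRing.val_unit1 shift_flag1.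
have exP : exists j, (0 < j)%N && (X j == Fl) by exists N; rewrite N0 PN eqxx.
case: (ex_minnP exP) => s /andP[s0 Ps] smin.
move/eqP: Ps => Ps.
have PM k : X (k * s)%N = Fl.
  elim: k => [|k IH]; first by rewrite mul0n /X expr0 shift_flag1.
  by rewrite mulSn PD.
have Pchar j : (X j == Fl) = (s %| j)%N.
  apply/eqP/idP; last by case/dvdnP=> k ->; apply: PM.
  move=> Pj; rewrite /dvdn; apply/negPn/negP => r0.
  have : X (j %% s)%N = Fl by rewrite -Pj {2}(divn_eq j s) PD.
  move/eqP => Pr.
  have := smin (j %% s)%N; rewrite lt0n r0 Pr => /(_ isT).
  by rewrite leqNgt ltn_mod s0.
exists s; split => //.
- by rewrite -Pchar PN.
- have sN : (s <= N)%N by apply: smin; rewrite N0 PN eqxx.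
  have Xinj : {in iota 0 s &, injective X}.
    have key j k : (j <= k < s)%N -> X j = X k -> j = k.
      case/andP=> jk ks E.
      have : X (k - j)%N = Fl.
        have e1 : X k = shift_flag (X (k - j)%N) (val b ^+ j) by rewrite -XD subnK.
        apply: (@shift_flag_inj L (b ^+ j)%g).
        by rewrite /= FinRing.val_unitX -e1 -E.
      move/eqP; rewrite Pchar; case: (posnP (k - j)%N) => [e _| p /(dvdn_leq p) h].
        by apply/eqP; rewrite eqn_leq jk /= -subn_eq0 e.
      have : (k - j < s)%N by rewrite (leq_ltn_trans (leq_subr _ _) ks).
      by rewrite ltnNge h.
    move=> j k; rewrite !mem_iota !add0n => /andP[_ js] /andP[_ ks] E.
    case: (leqP j k) => jk; first by apply: key; rewrite ?jk.
    by apply/esym/key; rewrite ?(ltnW jk).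
  have U : uniq (map X (iota 0 s)) by rewrite (map_inj_in_uniq Xinj) iota_uniq.
  rewrite /orbit_flag -/X.
  have -> : (size (undup [seq X j | j <- iota 0 N]) = size (map X (iota 0 s))).
    apply/perm_size/uniq_perm; rewrite ?undup_uniq // => F.
    rewrite mem_undup; apply/mapP/mapP => [[j] | [j]]; rewrite !mem_iota !add0n => /andP[_ jl] ->.
      exists (j %% s)%N; first by rewrite mem_iota add0n ltn_mod s0.
      by rewrite {1}(divn_eq j s) PD.
    by exists j; rewrite // mem_iota add0n (leq_trans jl sN).
  by rewrite size_map size_iota.
Qed.
Theorem proposition3p10 (L : finFieldType) (q n m : nat) (Fl : seq {set L}) (t : seq nat)
    (b : {unit L}) :
  prime_power q ->
  #|L| = (q ^ n)%N ->
  is_flag q Fl t ->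
  (m %| n)%N ->
  (exists2 i, (i < size t)%N & nth 0%N t i = m) ->
  (forall x : {unit L}, (val x) ^+ (q ^ m) = val x -> x \in <[b]>%g) ->
  let orb := size (orbit_flag b Fl) in
  [/\ (#[b]%g %/ (q ^ m - 1) %| orb)%N,
      orb = (#[b]%g %/ (q ^ m - 1))%N <->
        (forall j, (j < size Fl)%N -> is_subspace_over (Fsub L (q ^ m)) (nth set0 Fl j))
    & orb = (#[b]%g %/ (q ^ m - 1))%N -> nth 0%N t 0 = m].
Proof.
move=> _ cardL [[szFt sz0] Fdim F0 Fchain Flast] mn [i0 i0t ti0] Hb orb.
have i0F : (i0 < size Fl)%N by rewrite szFt.
have Fsub0 i : (i < size Fl)%N -> nth set0 Fl 0 \subset nth set0 Fl i.
  elim: i => [|i IH] ii; first exact: subxx.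
  apply: subset_trans (IH (ltnW ii)) _.
  exact: proper_sub (Fchain i ii).
set F := nth set0 Fl i0.
have [[F0in _ _] Fcard] := Fdim i0 i0F; rewrite ti0 in Fcard.
set Q := (q ^ m)%N in Fcard Hb *.
have F1card : (1 < #|nth set0 Fl 0|)%N by have := proper_card F0; rewrite cards1.
have Q1 : (1 < Q)%N by rewrite -Fcard (leq_trans F1card) // subset_leq_card // Fsub0.
have Q0 : (0 < Q - 1)%N by rewrite subn_gt0.
have QS : Q = (Q - 1).+1 by rewrite subn1 prednK // ltnW.
case: (orbit_period _ b Fl) => s [s0 sN orbE Pchar].
rewrite /orb orbE {orb orbE}.
set N := #[b]%g.
set c := (b ^+ s)%g.
have hc : #[c]%g = (N %/ s)%N by rewrite orderXdiv.
have stabR u : u \in <[c]>%g -> shift_flag Fl (val u) = Fl.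
  case/cycleP=> k ->; rewrite FinRing.val_unitX -FinRing.val_unitX -expgnA FinRing.val_unitX.
  by apply/eqP; rewrite Pchar dvdn_mulr.
have stabL u : u \in <[b]>%g -> shift_flag Fl (val u) = Fl -> u \in <[c]>%g.
  case/cycleP=> k -> ; rewrite FinRing.val_unitX => /eqP; rewrite Pchar.
  by case/dvdnP=> k' ->; rewrite mulnC expgnA mem_cycle.
have nthS (x : L) j : (j < size Fl)%N ->
    nth set0 (shift_flag Fl x) j = shift_set (nth set0 Fl j) x.
  by move=> jl; rewrite /shift_flag (nth_map set0).
have hcd : (#[c]%g %| Q - 1)%N.
  rewrite -Fcard; apply: fermat_set => //.
  by rewrite /F -nthS // stabR // cycle_id.
have cycT := field_unit_group_cyclic [set: {unit L}]%G.
case/cyclicP: (cycT) => g gE.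
have og : #[g]%g = (q ^ n - 1)%N.
  by rewrite orderE -gE /= card_finField_unit cardL subn1.
have dQ := @dvd_exp_sub1 q _ _ mn; rewrite -/Q in dQ.
set d := ((q ^ n - 1) %/ (Q - 1))%N.
have Qd : (q ^ n - 1 = d * (Q - 1))%N by rewrite divnK.
have d0 : (0 < d)%N.
  by have := order_gt0 g; rewrite og Qd muln_gt0 => /andP[].
set y := (g ^+ d)%g.
have oy : #[y]%g = (Q - 1)%N.
  by rewrite orderXdiv og Qd ?mulKn // dvdn_mulr.
have yval : val y ^+ Q = val y.
  by rewrite -FinRing.val_unitX QS expgSr -oy expg_order mul1g.
have yb : y \in <[b]>%g by apply: Hb.
have QN : (Q - 1 %| N)%N by rewrite -oy /N orderE order_dvdG.
have NE : N = (#[c]%g * s)%N by rewrite hc divnK.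
have h0 : (0 < #[c]%g)%N by apply: order_gt0.
case/dvdnP: hcd => e Qe.
have es : (e %| s)%N by rewrite -(dvdn_pmul2r h0) -Qe mulnC -NE.
have NQ : (N %/ (Q - 1))%N = (s %/ e)%N by rewrite NE Qe [(#[c]%g * s)%N]mulnC divnMr.
rewrite NQ.
have e0 : (0 < e)%N by move: Q0; rewrite Qe muln_gt0 => /andP[].
have Fsub_y : val y \in Fsub L Q by rewrite inE yval.
have y0 : val y != 0 by rewrite -unitfE (valP y).
have stab_y : (forall j, (j < size Fl)%N -> is_subspace_over (Fsub L Q) (nth set0 Fl j)) ->
   forall j, (j < size Fl)%N -> shift_set (nth set0 Fl j) (val y) = nth set0 Fl j.
  move=> Sub j jl; have [_ _ Hm] := Sub j jl.
  apply/eqP; rewrite eqEcard; apply/andP; split.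
    by apply/subsetP=> z /imsetP[u uU ->]; rewrite mulrC Hm.
  by rewrite card_imset //; apply: mulIf.
have Sub_imp : (forall j, (j < size Fl)%N -> is_subspace_over (Fsub L Q) (nth set0 Fl j)) ->
   e = 1%N.
  move=> Sub.
  have sy : shift_flag Fl (val y) = Fl.
    apply: (@eq_from_nth _ set0); first by rewrite size_map.
    move=> j; rewrite size_map => jl; rewrite nthS //; exact: stab_y.
  have yc := stabL y yb sy.
  have : (Q - 1 %| #[c]%g)%N by rewrite -oy orderE order_dvdG.
  rewrite Qe => /(dvdn_leq h0); rewrite -{2}(mul1n #[c]%g) leq_pmul2r // => e1.
  by apply/eqP; rewrite eqn_leq e1 e0.
have iff2 : (s = s %/ e)%N <->
    (forall j, (j < size Fl)%N -> is_subspace_over (Fsub L Q) (nth set0 Fl j)).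
  split; last first.
    by move/Sub_imp ->; rewrite divn1.
  move=> se.
  have e1 : e = 1%N.
    have := divnK es; rewrite -se => /eqP; rewrite -{2}(muln1 s) eqn_pmul2l // => /eqP.
    done.
  move=> j jl; have [[Z0 ZD ZM] _] := Fdim j jl; split => // a x.
  rewrite inE => /eqP aQ xU.
  have [->|a0] := eqVneq a 0; first by rewrite mul0r.
  have au : a \is a GRing.unit by rewrite unitfE.
  pose ua := FinRing.Unit au.
  have ua1 : (ua ^+ (Q - 1))%g = 1%g.
    apply: val_inj; rewrite FinRing.val_unitX FinRing.val_unit1 /=.
    apply: (mulIf a0); rewrite mul1r -exprSr -QS aQ //.
  have : ua \in <[c]>%g.
    rewrite -cycle_subG -(cardSg_cyclic cycT) ?subsetT // -!orderE.
    have hq : #[c]%g = (Q - 1)%N by rewrite Qe e1 mul1n.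
    by rewrite hq order_dvdn ua1.
  move/stabR => sa.
  have : x * a \in shift_set (nth set0 Fl j) a by apply/imsetP; exists x.
  by rewrite -nthS // sa mulrC.
split.
- by rewrite dvdn_div ?es.
- exact: iff2.
- move/iff2 => Sub.
  have sy := stab_y Sub 0%N sz0.
  have [[Fp0 _ _] Fc1] := Fdim 0%N sz0.
  have := fermat_set Fp0 sy.
  rewrite oy Fc1 => dv.
  have le : (q ^ nth 0%N t 0 <= Q)%N.
    by rewrite -Fc1 -Fcard subset_leq_card // Fsub0.
  have F1c := F1card; rewrite Fc1 in F1c.
  have := dvdn_leq _ dv; rewrite subn_gt0 => /(_ F1c) le2.
  have eqQ : (q ^ nth 0%N t 0 = Q)%N.
    apply/eqP; rewrite eqn_leq le /=.
    by rewrite -(subnK (ltnW Q1)) -(subnK (ltnW F1c)) leq_add2r.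
  have q1 : (1 < q)%N.
    move: Q1; rewrite /Q; case: (q) => [|[|q']] //; first by case: (m) => // m'; rewrite exp0n.
    by rewrite exp1n.
  by apply/eqP; rewrite -(eqn_exp2l _ _ q1) eqQ.
Qed.
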